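(* Let $\mathcal F$ be a frame and let $\Psi=\Psi(\mathcal F)$, $\vec p$ and $\mathbb{P}$ be as in the context. Then for $\mathbb{P}$-almost every $\omega\in\Omega$, $$\dim_H\big(J(\Psi(\omega))\big)=0.$$
   Context: Let $d\ge1$, $X=[0,1]^d$, and $\boldsymbol e_1,\dots,\boldsymbol e_d$ the standard basis of $\mathbb{R}^d$. For $\boldsymbol i=(i_1,\dots,i_d)\in\{0,1\}^d$ let $\phi_{\boldsymbol i}(x)=\frac12x+\frac12\sum_{\ell=1}^d i_\ell\boldsymbol e_\ell$. Let $I_1=\{(0,\dots,0)\}$ and $I_{2^d}=\{0,1\}^d$. A frame is a pair $\mathcal F=(\{U_n\}_{n\in\mathbb{N}},\{V_n\}_{n\in\mathbb{N}})$ of sequences of positive integers with $U_1\ge1$ and, for all $n\in\mathbb{N}$, $nU_n\le V_n$ and $(U_n+V_n)^3\le U_{n+1}$. For $i\in\mathbb{N}$ let $I^{(i)}=I_1^{U_i}\times I_{2^d}^{V_i}$, for $\tau=(\tau_1,\dots,\tau_{U_i+V_i})\in I^{(i)}$ let $\psi^{(i)}_\tau=\phi_{\tau_1}\circ\cdots\circ\phi_{\tau_{U_i+V_i}}$, and $\Psi(\mathcal F)=\{\Psi^{(i)}\}_{i\in\mathbb{N}}$ with $\Psi^{(i)}=\{\psi^{(i)}_\tau\}_{\tau\in I^{(i)}}$. Let $p_n=\frac{1}{Cn^2}$, $C=\sum_{n\ge1}n^{-2}$, and let $\mathbb{P}$ be the Bernoulli measure on $\Omega=\mathbb{N}^{\mathbb{N}}$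 with $\mathbb{P}([\omega_1\dots\omega_n])=p_{\omega_1}\cdots p_{\omega_n}$. For $\omega\in\Omega$, $\Sigma^n_\omega=\prod_{k=1}^nI^{(\omega_k)}$, $\psi^{(\omega)}_\tau=\psi^{(\omega_1)}_{\tau_1}\circ\cdots\circ\psi^{(\omega_n)}_{\tau_n}$ for $\tau\in\Sigma^n_\omega$, and $J(\Psi(\omega))=\bigcap_{n\ge1}\bigcup_{\tau\in\Sigma^n_\omega}\psi^{(\omega)}_\tau(X)$. $\dim_H$ is Euclidean Hausdorff dimension. *)

(* Defs.v *)
From HB Require Import structures.
From mathcomp Require Import all_boot all_order all_algebra.
From mathcomp Require Import all_classical all_reals all_analysis.
Set Implicit Arguments. Unset Strict Implicit. Unset Printing Implicit Defensive.
Import Order.TTheory GRing.Theory Num.Theory.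
Import numFieldNormedType.Exports.
Local Open Scope classical_set_scope.
Local Open Scope ring_scope.

Section Defs.
Variable R : realType.
Variable d : nat.

Definition pt := 'I_d -> R.

Definition edist (x y : pt) : R := Num.sqrt (\sum_(l < d) (x l - y l) ^+ 2).

(* diameter (Euclidean); -oo for the empty set *)
Definition diam (A : set pt) : \bar R :=
  ereal_sup [set r | exists x y, A x /\ A y /\ r = (edist x y)%:E].

(* diam(A)^s, with the convention that the empty set contributes 0 *)
Definition hcontrib (s : R) (A : set pt) : \bar R :=
  match diam A with
  | EFin r => (powR r s)%:E
  | +oo%E => +oo%E
  | -oo%E => 0%E
  end.

Definition hausdorff_delta (s delta : R) (A : set pt) : \bar R :=
  ereal_inf [set (\sum_(i <oo) hcontrib s (C i))%E | C in
    [set C : nat -> set pt | A `<=` \bigcup_i C i /\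
                             forall i, (diam (C i) <= delta%:E)%E]].

Definition hausdorff (s : R) (A : set pt) : \bar R :=
  ereal_sup [set hausdorff_delta s delta A | delta in [set delta : R | 0 < delta]].

Definition hdim (A : set pt) : \bar R :=
  ereal_inf [set s%:E | s in [set s : R | 0 <= s /\ hausdorff s A = 0%E]].

Definition Xcube : set pt := [set x | forall l, 0 <= x l <= 1].

Definition phi (b : 'I_d -> bool) (x : pt) : pt :=
  fun l => x l / 2 + (b l)%:R / 2.

Definition phi_word (w : seq ('I_d -> bool)) (x : pt) : pt :=
  foldr phi x w.

(* frame (U_n)_{n>=1}, (V_n)_{n>=1}; values at 0 are irrelevant *)
Definition is_frame (U V : nat -> nat) : Prop :=
  (1 <= U 1)%N /\
  forall n, (1 <= n)%N ->
    [/\ (0 < U n)%N, (0 < V n)%N, (n * U n <= V n)%N &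
        ((U n + V n) ^ 3 <= U n.+1)%N].

(* w in I^(i) = I_1^{U_i} x I_{2^d}^{V_i} *)
Definition in_I (U V : nat -> nat) (i : nat) (w : seq ('I_d -> bool)) : Prop :=
  size w = (U i + V i)%N /\
  forall k, (k < U i)%N -> forall l, nth (fun _ => false) w k l = false.

(* J(Psi(omega)); omega k is the (k+1)-th letter omega_{k+1} *)
Definition Jset (U V : nat -> nat) (omega : nat -> nat) : set pt :=
  [set x | forall n, (0 < n)%N ->
     exists ws : seq (seq ('I_d -> bool)),
       [/\ size ws = n,
           (forall k, (k < n)%N -> in_I U V (omega k) (nth [::] ws k)) &
           exists y, Xcube y /\ x = phi_word (flatten ws) y]].

End Defs.

Definition Cconst (R : realType) : R :=
  limn (series (fun n : nat => ((n.+1)%:R ^+ 2 : R)^-1)).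

Definition pn (R : realType) (n : nat) : R := ((Cconst R) * (n%:R ^+ 2))^-1.

(* cylinder [a_1 ... a_m] in Omega = N^N (positions 0-based) *)
Definition cylinder (a : seq nat) : set (nat -> nat) :=
  [set omega | forall k, (k < size a)%N -> omega k = nth 0%N a k].

Definition cyl_mass (R : realType) (a : seq nat) : R := \prod_(k <- a) pn R k.

(* N is P-null: its outer measure (inf over countable covers by cylinders
   with positive-integer entries of the total P-mass) is 0 *)
Definition P_null (R : realType) (N : set (nat -> nat)) : Prop :=
  forall eps : R, 0 < eps ->
    exists c : nat -> seq nat,
      [/\ (forall j, all (fun k => 0 < k)%N (c j)),
          N `<=` \bigcup_j cylinder (c j) &
          (\sum_(j <oo) (cyl_mass R (c j))%:E <= eps%:E)%E].

(* Main.v *)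
Require Import Defs.
From HB Require Import structures.
From mathcomp Require Import all_boot all_order all_algebra.
From mathcomp Require Import all_classical all_reals all_analysis.
From mathcomp Require Import zify ring lra.
Set Implicit Arguments. Unset Strict Implicit. Unset Printing Implicit Defensive.
Import Order.TTheory GRing.Theory Num.Theory.
Import numFieldNormedType.Exports.
Local Open Scope classical_set_scope.
Local Open Scope ring_scope.
Section Frame.
Variables (U V : nat -> nat).
Hypothesis fr : is_frame U V.

Lemma fr_step n : (1 <= n)%N ->
  [/\ (0 < U n)%N, (0 < V n)%N, (n * U n <= V n)%N & ((U n + V n) ^ 3 <= U n.+1)%N].
Proof. by case: fr => _ /(_ n). Qed.

Lemma cube_ge (a : nat) : (a <= a ^ 3)%N.
Proof. case: a => // a; rewrite expnS leq_pmulr // expn_gt0. Qed.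

Lemma U_le_next n : (1 <= n)%N -> (U n + V n <= U n.+1)%N.
Proof. move=> /fr_step [_ _ _ h]; exact: leq_trans (cube_ge _) h. Qed.

Lemma U_le_V n : (1 <= n)%N -> (U n <= V n)%N.
Proof. move=> n1; case: (fr_step n1) => _ _ h _; apply: leq_trans h; apply: leq_pmull; lia. Qed.

Lemma Umono a b : (1 <= a)%N -> (a <= b)%N -> (U a <= U b)%N.
Proof.
move=> a1; elim: b => [|b IH]; first by lia.
rewrite leq_eqVlt => /orP [/eqP->//|]; rewrite ltnS => ab.
apply: leq_trans (IH ab) _; have := U_le_next (leq_trans a1 ab); lia.
Qed.

Lemma Vmono a b : (1 <= a)%N -> (a <= b)%N -> (V a <= V b)%N.
Proof.
move=> a1; elim: b => [|b IH]; first by lia.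
rewrite leq_eqVlt => /orP [/eqP->//|]; rewrite ltnS => ab.
apply: leq_trans (IH ab) _; have b1 := leq_trans a1 ab.
have := U_le_next b1; have := U_le_V (ltn0Sn b); lia.
Qed.

Lemma Vcube n : (1 <= n)%N -> (V n ^ 3 <= U n.+1)%N.
Proof.
move=> n1; case: (fr_step n1) => _ _ _ h; apply: leq_trans h.
by rewrite leq_exp2r // leq_addl.
Qed.

Lemma V2_ge16 : (16 <= V 2)%N.
Proof.
have [u1 _] := fr; have [_ _ h2 _] := fr_step (isT : (1 <= 2)%N).
have [_ _ h1 c] := fr_step (isT : (1 <= 1)%N).
have : (8 <= U 2)%N.
  apply: leq_trans c; have : (2 <= U 1 + V 1)%N by lia.
  by move=> h; rewrite (_ : 8 = 2 ^ 3)%N // leq_exp2r.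
lia.
Qed.

Lemma Vgrowth j : ((j + 3) ^ 2 * 2 ^ j <= V (j + 2))%N.
Proof.
elim: j => [|j IH]; first by rewrite add0n; apply: leq_trans V2_ge16.
have h16 : (16 <= V (j + 2))%N by apply: leq_trans V2_ge16 (Vmono _ _); lia.
have : (V (j + 2) ^ 3 <= V (j.+1 + 2))%N.
  rewrite addSn; apply: leq_trans (Vcube _) _; first lia.
  by apply: U_le_V.
move=> h; apply: leq_trans h.
have h256 : (256 <= V (j + 2) * V (j + 2))%N by nia.
have := leq_mul IH h256.
have sq : forall a, (a ^ 2 = a * a)%N by move=> a; rewrite expnS expn1.
have cb : forall a, (a ^ 3 = a * (a * a))%N by move=> a; rewrite !expnS expn0 muln1.
rewrite !sq cb expnS.
set a := (2 ^ j)%N; set v := V (j + 2) => h.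
apply: leq_trans h.
have : ((j.+1 + 3) * (j.+1 + 3) * 2 <= (j + 3) * (j + 3) * 256)%N by nia.
move=> h; rewrite mulnCA mulnA mulnAC [X in (_ <= X)%N]mulnAC.
have := leq_mul h (leqnn a); nia.
Qed.

End Frame.
Section Prob.
Variable R : realType.

Definition aseq (n : nat) : R := ((n.+1)%:R ^+ 2)^-1.

Lemma aseq_ge0 n : 0 <= aseq n.
Proof. by rewrite /aseq invr_ge0 exprn_ge0. Qed.

Lemma series_le n : series aseq n <= 2 - 2 / (n.+1)%:R.
Proof.
elim: n => [|n IH]; first by rewrite /series /= big_nil divr1 subrr.
rewrite seriesSr; apply: (le_trans (lerD IH (lexx _))).
have key : forall a : R, 1 <= a -> (a ^+ 2)^-1 <= 2 / a - 2 / (a + 1).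
  move=> a a1; have a0 : 0 < a by apply: lt_le_trans a1.
  have a10 : 0 < a + 1 by rewrite addr_gt0.
  rewrite -subr_ge0.
  have -> : 2 / a - 2 / (a + 1) - (a ^+ 2)^-1 = (a - 1) / (a ^+ 2 * (a + 1)).
    by field; rewrite lt0r_neq0 // lt0r_neq0 //.
  by rewrite divr_ge0 ?subr_ge0 // mulr_ge0 // ?exprn_ge0 // ltW.
have := key n.+1%:R; rewrite ler1n /= -[n.+2]addn1 natrD /aseq => /(_ isT).
move: (2 / n.+1%:R) (2 / (n.+1%:R + 1)) (n.+1%:R ^- 2) => x y z; lra.
Qed.

Lemma series_nd : nondecreasing_seq (series aseq).
Proof.
apply/nondecreasing_seqP => n; rewrite seriesSr lerDl; exact: aseq_ge0.
Qed.

Lemma series_cvg : cvgn (series aseq).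
Proof.
apply: nondecreasing_is_cvgn; first exact: series_nd.
exists 2 => _ [n _ <-]; apply: le_trans (series_le n) _.
by rewrite gerDl oppr_le0 divr_ge0.
Qed.

Lemma series_leC n : series aseq n <= Cconst R.
Proof. exact: nondecreasing_cvgn_le series_nd series_cvg n. Qed.

Lemma Cconst_ge1 : 1 <= Cconst R.
Proof.
apply: le_trans (series_leC 1).
by rewrite /series /= big_nat1 /aseq expr1n invr1.
Qed.

Lemma Cconst_gt0 : 0 < Cconst R.
Proof. exact: lt_le_trans ltr01 Cconst_ge1. Qed.

Lemma sum_pn g : \sum_(x <- iota 1 g) pn R x = series aseq g / Cconst R.
Proof.
elim: g => [|g IH]; first by rewrite big_nil /series /= big_nil mul0r.
rewrite -[g.+1]addn1 iotaD big_cat /= big_seq1 IH addn1 seriesSr mulrDl.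
congr (_ + _); rewrite /pn /aseq add1n invfM mulrC //.
Qed.

Lemma pn_gt0 n : (0 < n)%N -> 0 < pn R n.
Proof.
by move=> n0; rewrite /pn invr_gt0 mulr_gt0 ?Cconst_gt0 // exprn_gt0 // ltr0n.
Qed.

Lemma pn_ge0 n : 0 <= pn R n.
Proof.
rewrite /pn invr_ge0; apply: mulr_ge0; first exact: ltW (Cconst_gt0).
exact: exprn_ge0.
Qed.

Lemma sum_pn_lt g : (0 < g)%N ->
  \sum_(x <- iota 1 g.-1) pn R x <= 1 - pn R g.
Proof.
case: g => // g _ /=.
rewrite lerBrDr sum_pn.
have -> : pn R g.+1 = aseq g / Cconst R by rewrite /pn /aseq invfM mulrC.
rewrite -mulrDl -seriesSr ler_pdivrMr ?Cconst_gt0 // mul1r; exact: series_leC.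
Qed.

Lemma bernoulli_inv (x : R) k : 0 <= x <= 1 -> (1 - x) ^+ k * (1 + k%:R * x) <= 1.
Proof.
move=> /andP [x0 x1]; elim: k => [|k IH]; first by rewrite expr0 mul0r addr0 mulr1.
rewrite exprS -mulrA.
have h : (1 - x) * (1 + k.+1%:R * x) <= 1 + k%:R * x.
  rewrite -addn1 natrD; have k0 : 0 <= k%:R :> R by [].
  nra.
apply: le_trans IH.
rewrite mulrCA; apply: ler_wpM2l => //; by rewrite exprn_ge0 // subr_ge0.
Qed.

Lemma pow_le_inv (x : R) k : 0 < x <= 1 -> (0 < k)%N -> (1 - x) ^+ k <= (k%:R * x)^-1.
Proof.
move=> /andP [x0 x1] k0.
have kx : 0 < k%:R * x by rewrite mulr_gt0 // ltr0n.
rewrite -div1r ler_pdivlMr //.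
apply: le_trans (bernoulli_inv (x := x) k _); last by rewrite (ltW x0) x1.
rewrite ler_wpM2l ?exprn_ge0 ?subr_ge0 // lerDr //.
Qed.

End Prob.
Fixpoint Pref (g k : nat) : seq (seq nat) :=
  if k is k'.+1 then [seq x :: s | x <- iota 1 g.-1, s <- Pref g k'] else [:: [::]].

Lemma Pref_mass (R : realType) g k :
  \sum_(a <- Pref g k) cyl_mass R a = (\sum_(x <- iota 1 g.-1) pn R x) ^+ k.
Proof.
elim: k => [|k IH]; first by rewrite /= big_seq1 /cyl_mass big_nil expr0.
rewrite /= big_allpairs_dep exprS mulr_suml; apply: eq_bigr => x _.
rewrite -IH mulr_sumr; apply: eq_bigr => s _; by rewrite /cyl_mass big_cons.
Qed.

Lemma mem_Pref g k a : size a = k -> all (fun x => (0 < x < g)%N) a -> a \in Pref g k.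
Proof.
elim: a k => [|x a IH] [|k] //=.
move=> [sk] /andP [hx ha]; apply: allpairs_f; last exact: IH.
rewrite mem_iota; move/andP: hx => [h1 h2]; rewrite h1 /= add1n prednK //.
exact: leq_ltn_trans h2.
Qed.

Lemma Pref_pos g k a : a \in Pref g k -> all (fun x => (0 < x)%N) a.
Proof.
elim: k a => [|k IH] a /=; first by rewrite mem_seq1 => /eqP ->.
move=> /allpairsP [[x s] [/= hx hs ->]] /=; rewrite IH // andbT.
by move: hx; rewrite mem_iota; lia.
Qed.

Lemma Pref_size g k : (2 <= g)%N -> (0 < size (Pref g k))%N.
Proof.
move=> g2; have : nseq k 1%N \in Pref g k.
  apply: mem_Pref; first by rewrite size_nseq.
  by apply/allP => x /nseqP [-> _]; lia.
by case: (Pref g k).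
Qed.

Section Cover.
Variable R : realType.
Variables (U V : nat -> nat).
Hypothesis fr : is_frame U V.

Definition PP (j : nat) := Pref (j + 3) (V (j + 2)).

Lemma PP_mass j : \sum_(a <- PP j) cyl_mass R a <= Cconst R / (2 ^+ j).
Proof.
rewrite /PP Pref_mass.
set g := (j + 3)%N; set k := V (j + 2).
have g0 : (0 < g)%N by rewrite /g addn3.
have hp := pn_gt0 R g0.
have hp1 : pn R g <= 1.
  rewrite /pn invf_le1 ?mulr_gt0 ?Cconst_gt0 ?exprn_gt0 ?ltr0n //.
  have h1 : 1 <= (g%:R : R) ^+ 2 by rewrite exprn_ege1 // ler1n.
  have := Cconst_ge1 R; move: (Cconst R) ((g%:R : R) ^+ 2) h1 => a b; nra.
have hg : ((g ^ 2) * 2 ^ j <= k)%N by exact: (Vgrowth fr j).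
have k0 : (0 < k)%N by apply: leq_trans hg; rewrite muln_gt0 !expn_gt0 g0.
have sp0 : 0 <= \sum_(x <- iota 1 g.-1) pn R x by apply: sumr_ge0 => x _; exact: pn_ge0.
have h2 : (\sum_(x <- iota 1 g.-1) pn R x) ^+ k <= (1 - pn R g) ^+ k.
  by apply: lerXn2r; rewrite ?nnegrE // ?subr_ge0 // sum_pn_lt.
apply: le_trans h2 _.
have h3 : (1 - pn R g) ^+ k <= (k%:R * pn R g)^-1 by apply: pow_le_inv => //; rewrite hp hp1.
apply: le_trans h3 _.
rewrite /pn invfM invrK mulrCA; apply: ler_wpM2l; first exact: ltW (Cconst_gt0 R).
rewrite mulrC ler_pdivrMr ?ltr0n // mulrC ler_pdivlMr ?exprn_gt0 //.
by move: hg; rewrite -(ler_nat R) natrM !natrX.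
Qed.

Definition FF (J n : nat) := flatten [seq PP j | j <- iota J n.+1].

Lemma FF_prefix J n m i : (n <= m)%N -> (i < size (FF J n))%N ->
  nth [::] (FF J m) i = nth [::] (FF J n) i.
Proof.
move=> nm hi; rewrite /FF.
have -> : m.+1 = (n.+1 + (m - n))%N by lia.
by rewrite iotaD map_cat flatten_cat nth_cat hi.
Qed.

Lemma FF_size J n : (n < size (FF J n))%N.
Proof.
elim: n => [|n IH]; rewrite /FF.
  by rewrite /= cats0 /PP; apply: Pref_size; lia.
rewrite -[n.+2]addn1 iotaD map_cat flatten_cat size_cat.
have -> : flatten [seq PP j | j <- iota (J + n.+1) 1] = PP (J + n.+1) by rewrite /= cats0.
have : (0 < size (PP (J + n.+1)))%N by rewrite /PP; apply: Pref_size; lia.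
move: IH; rewrite /FF; lia.
Qed.

Definition cc (J n : nat) := nth [::] (FF J n) n.

Lemma cc_pos J n : all (fun k => 0 < k)%N (cc J n).
Proof.
rewrite /cc; have [h|h] := ltnP n (size (FF J n)); last by rewrite nth_default.
have : nth [::] (FF J n) n \in FF J n by apply: mem_nth.
move=> /flattenP [s /mapP [j _ ->]]; exact: Pref_pos.
Qed.

Lemma cc_cover J j a : (J <= j)%N -> a \in PP j -> exists n, cc J n = a.
Proof.
move=> Jj ha; set N := (j - J)%N.
have : a \in FF J N.
  apply/flattenP; exists (PP j) => //; apply: map_f; rewrite mem_iota; lia.
move=> hin; exists (index a (FF J N)).
set i := index a (FF J N).
have hi : (i < size (FF J N))%N by rewrite index_mem.
rewrite /cc -(@FF_prefix J i (maxn i N) i) ?leq_maxl ?FF_size //.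
by rewrite (@FF_prefix J N (maxn i N) i) ?leq_maxr // nth_index.
Qed.

Lemma geom J n : \sum_(j <- iota J n) (2 ^+ j)^-1 <= 2 / (2 ^+ J) :> R.
Proof.
elim: n J => [|n IH] J; first by rewrite big_nil divr_ge0 // exprn_ge0.
rewrite /= big_cons; apply: le_trans (lerD (lexx _) (IH J.+1)) _.
rewrite exprS; have x0 : 0 < 2 ^+ J :> R by rewrite exprn_gt0.
move: (2 ^+ J) x0 => x x0.
have -> : x^-1 + 2 / (2 * x) = 2 / x by field; rewrite lt0r_neq0.
by [].
Qed.

Lemma cc_mass J N :
  \sum_(n < N) cyl_mass R (cc J n) <= 2 * Cconst R / (2 ^+ J).
Proof.
have mass0 : forall a, 0 <= cyl_mass R a.
  by move=> a; rewrite /cyl_mass; apply: prodr_ge0 => k _; exact: pn_ge0.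
have hs := FF_size J N.
have e1 : \sum_(n < N) cyl_mass R (cc J n) = \sum_(a <- take N (FF J N)) cyl_mass R a.
  rewrite (big_nth [::]) size_take hs big_mkord; apply: eq_bigr => i _.
  by rewrite nth_take // /cc (@FF_prefix J i N i) ?FF_size // ltnW.
have e2 : \sum_(a <- take N (FF J N)) cyl_mass R a <= \sum_(a <- FF J N) cyl_mass R a.
  rewrite [X in _ <= X](_ : _ = \sum_(a <- take N (FF J N) ++ drop N (FF J N)) cyl_mass R a); last by rewrite cat_take_drop.
  by rewrite big_cat /= lerDl sumr_ge0.
have e3 : \sum_(a <- FF J N) cyl_mass R a <= \sum_(j <- iota J N.+1) Cconst R / (2 ^+ j).
  rewrite /FF big_flatten big_map; apply: ler_sum => j _; exact: PP_mass.
rewrite e1; apply: le_trans e2 _; apply: le_trans e3 _.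
have -> : 2 * Cconst R / 2 ^+ J = Cconst R * (2 / 2 ^+ J) by ring.
rewrite -mulr_sumr; apply: ler_wpM2l; [exact: ltW (Cconst_gt0 R) | exact: geom].
Qed.

End Cover.
Lemma nneseries_ub (R : realType) (u : nat -> R) (B : R) :
  (forall n, 0 <= u n) -> (forall N, \sum_(n < N) u n <= B) ->
  (\sum_(n <oo) (u n)%:E <= B%:E)%E.
Proof.
move=> u0 hB.
have nd : nondecreasing_seq (fun N => (\sum_(0 <= n < N) (u n)%:E)%E).
  apply: ereal_nondecreasing_series => n _ _; by rewrite lee_fin.
rewrite (cvg_lim _ (ereal_nondecreasing_cvgn nd)) //.
apply: ge_ereal_sup => _ [N _ <-] /=.
by rewrite -EFin_sum_fine ?big_mkord ?lee_fin ?hB //.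
Qed.

Section Pnull.
Variable R : realType.
Variables (U V : nat -> nat).
Hypothesis fr : is_frame U V.

Lemma Pnull_of (Bad : set (nat -> nat)) :
  (forall w, Bad w -> (forall k, (0 < w k)%N) /\
     forall J, exists j, (J <= j)%N /\ forall k, (k < V (j + 2))%N -> (w k < j + 3)%N) ->
  P_null R Bad.
Proof.
move=> hB eps e0.
have C0 := Cconst_gt0 R.
set J := Num.bound (2 * Cconst R / eps).
have hJ : 2 * Cconst R / eps < J%:R.
  by apply: archi_boundP; rewrite divr_ge0 // ?mulr_ge0 // ltW.
exists (cc V J); split.
- by move=> n; apply: cc_pos.
- move=> w /hB [wpos /(_ J) [j [Jj hj]]].
  set a := mkseq w (V (j + 2)).
  have ha : a \in PP V j.
    apply: mem_Pref; first by rewrite size_mkseq.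
    apply/allP => x /mapP [k]; rewrite mem_iota => /andP [_ hk] ->.
    by rewrite wpos /=; apply: hj.
  have [n hn] := cc_cover Jj ha.
  exists n => //; rewrite /cylinder hn => k; rewrite size_mkseq => hk.
  by rewrite nth_mkseq.
- apply: nneseries_ub.
    by move=> n; rewrite /cyl_mass; apply: prodr_ge0 => k _; exact: pn_ge0.
  move=> N; apply: le_trans (@cc_mass R U V fr J N) _.
  rewrite ler_pdivrMr ?exprn_gt0 //.
  rewrite ltr_pdivrMr // in hJ.
  apply: (le_trans (ltW hJ)); rewrite mulrC; apply: ler_wpM2l; first exact: ltW.
  rewrite -natrX ler_nat; exact: ltnW (ltn_expl J (isT : (1 < 2)%N)).
Qed.

End Pnull.
Section Geom.
Variable R : realType.
Variable d : nat.

Notation word := (seq ('I_d -> bool)).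
Definition zerob : 'I_d -> bool := fun _ => false.

Lemma phi_wordE (w : word) (x : pt R d) l :
  phi_word w x l = x l / 2 ^+ size w + phi_word w (fun _ => 0) l.
Proof.
elim: w x => [|b w IH] x /=; first by rewrite expr0 divr1 addr0.
rewrite /phi IH [in RHS]IH /= exprS invfM.
rewrite mul0r add0r; by ring.
Qed.

Lemma phi_word_cat (w1 w2 : word) (x : pt R d) :
  phi_word (w1 ++ w2) x = phi_word w1 (phi_word w2 x).
Proof. by rewrite /phi_word foldr_cat. Qed.

Lemma phi_word_X (w : word) (x : pt R d) : Xcube x -> Xcube (phi_word w x).
Proof.
elim: w => [|b w IH] //= hx l; have /andP [h0 h1] := IH hx l.
rewrite /phi; apply/andP; split.
  by rewrite addr_ge0 // divr_ge0.
have hb : ((b l)%:R : R) <= 1 by case: (b l).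
lra.
Qed.

Lemma in_I_split U V a (w : word) : in_I U V a w ->
  w = nseq (U a) zerob ++ drop (U a) w /\ size (drop (U a) w) = V a.
Proof.
move=> [sw hw]; split; last by rewrite size_drop sw addKn.
rewrite -{1}(cat_take_drop (U a) w); congr (_ ++ _).
apply: (@eq_from_nth _ zerob); first by rewrite size_take size_nseq sw; case: ltnP => //; lia.
move=> i; rewrite size_take sw => hi.
have hi' : (i < U a)%N by move: hi; case: ifP => //; lia.
rewrite nth_nseq hi' nth_take //; apply: funext => l; exact: hw.
Qed.

Lemma Jset_stage U V (omega : nat -> nat) (x : pt R d) k :
  Jset U V omega x ->
  exists ws : seq word, [/\ size ws = k,
    (forall i, (i < k)%N -> in_I U V (omega i) (nth [::] ws i)) &
    exists y, Xcube y /\ x = phi_word (flatten ws ++ nseq (U (omega k)) zerob) y].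
Proof.
move=> /(_ k.+1 (ltn0Sn k)) [ws0 [s0 hI [y [hy ->]]]].
exists (take k ws0); split.
- by rewrite size_take s0 ltnSn.
- by move=> i hi; rewrite nth_take //; apply: hI; exact: ltnW.
- have hk := hI k (ltnSn k).
  have [e1 e2] := in_I_split hk.
  exists (phi_word (drop (U (omega k)) (nth [::] ws0 k)) y); split.
    exact: phi_word_X.
  rewrite -phi_word_cat -catA -e1.
  rewrite -{1}(cat_take_drop k ws0) flatten_cat.
  rewrite (drop_nth [::]); last by rewrite s0.
  by rewrite drop_oversize /= ?cats0 // s0.
Qed.

End Geom.
Lemma In_catl (T : Type) (x : T) s1 s2 : List.In x s1 -> List.In x (cat s1 s2).
Proof. elim: s1 => //= a s IH [->|h]; [by left | right; exact: IH]. Qed.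

Lemma In_catr (T : Type) (x : T) s1 s2 : List.In x s2 -> List.In x (cat s1 s2).
Proof. elim: s1 => //= a s IH h; right; exact: IH. Qed.

Lemma In_map (T T2 : Type) (f : T -> T2) x s : List.In x s -> List.In (f x) (map f s).
Proof. elim: s => //= a s IH [->|h]; [by left | right; exact: IH]. Qed.

Lemma In_allpairs (T T2 T3 : Type) (f : T -> T2 -> T3) s t x y :
  List.In x s -> List.In y t -> List.In (f x y) [seq f x y | x <- s, y <- t].
Proof.
elim: s => //= a s IH [->|h] hy.
  by apply: In_catl; apply: In_map.
by apply: In_catr; apply: IH.
Qed.

Lemma In_nth (T : Type) (x0 x : T) s : List.In x s -> exists i, (i < size s)%N /\ nth x0 s i = x.
Proof.
elim: s => //= a s IH [->|h]; first by exists 0%N.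
by have [i [hi e]] := IH h; exists i.+1.
Qed.

Lemma In_mem (T : eqType) (x : T) s : x \in s -> List.In x s.
Proof. elim: s => //= a s IH; rewrite in_cons => /orP [/eqP ->|h]; [by left | right; exact: IH]. Qed.

Section Words.
Variable d : nat.
Notation word := (seq ('I_d -> bool)).

Definition allb : seq ('I_d -> bool) :=
  map (fun f : {ffun 'I_d -> bool} => (fun l => f l)) (enum {ffun 'I_d -> bool}).

Lemma size_allb : size allb = (2 ^ d)%N.
Proof. by rewrite size_map -cardE card_ffun card_bool card_ord. Qed.

Lemma In_allb b : List.In b allb.
Proof.
have -> : b = (fun l => [ffun l => b l] l) by apply: funext => l; rewrite ffunE.
apply: (In_map (fun f : {ffun 'I_d -> bool} => fun l => f l)).
by apply: In_mem; rewrite mem_enum.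
Qed.

Fixpoint Wd (n : nat) : seq word :=
  if n is n'.+1 then [seq b :: w | b <- allb, w <- Wd n'] else [:: [::]].

Lemma size_Wd n : size (Wd n) = (2 ^ (d * n))%N.
Proof.
elim: n => [|n IH] /=; first by rewrite muln0.
by rewrite size_allpairs size_allb IH -expnD mulnS.
Qed.

Lemma In_Wd (w : word) : List.In w (Wd (size w)).
Proof.
elim: w => [|b w IH] /=; first by left.
exact: (In_allpairs (fun b w => b :: w)) (In_allb b) IH.
Qed.

Variables (U V : nat -> nat).

Fixpoint Wpre (ls : seq nat) : seq word :=
  if ls is a :: ls' then
    [seq (nseq (U a) (@zerob d) ++ q) ++ r | q <- Wd (V a), r <- Wpre ls']
  else [:: [::]].

Lemma size_Wpre ls : size (Wpre ls) = (2 ^ (d * sumn (map V ls)))%N.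
Proof.
elim: ls => [|a ls IH] /=; first by rewrite muln0.
by rewrite size_allpairs size_Wd IH -expnD mulnDr.
Qed.

Lemma In_Wpre ls (ws : seq word) : size ws = size ls ->
  (forall i, (i < size ls)%N -> in_I U V (nth 0%N ls i) (nth [::] ws i)) ->
  List.In (flatten ws) (Wpre ls).
Proof.
elim: ls ws => [|a ls IH] [|w ws] //=; first by move=> _ _; left.
move=> [sz] h.
have [e1 e2] := in_I_split (h 0%N (ltn0Sn _)).
rewrite /= in e1 e2; rewrite [in X in List.In (X ++ _) _]e1.
apply: (In_allpairs (fun q r => (nseq (U a) (@zerob d) ++ q) ++ r)).
  by rewrite -e2; apply: In_Wd.
apply: IH => // i hi; exact: (h i.+1).
Qed.

End Words.
Section Diam.
Variable R : realType.
Variable d : nat.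
Local Notation pt := (pt R d).

Lemma diam_le (A : set pt) (B : R) :
  (forall x y, A x -> A y -> Defs.edist x y <= B) -> (diam A <= B%:E)%E.
Proof.
move=> h; apply: ge_ereal_sup => _ [x [y [hx [hy ->]]]].
by rewrite lee_fin; apply: h.
Qed.

Lemma edist_ge0 (x y : pt) : 0 <= Defs.edist x y.
Proof. exact: sqrtr_ge0. Qed.

Lemma diam_ge0 (A : set pt) x : A x -> (0 <= diam A)%E.
Proof.
move=> hx; apply: le_ereal_sup_tmp; exists (Defs.edist x x)%:E.
  by exists x, x.
by rewrite lee_fin edist_ge0.
Qed.

Lemma hcontrib_le (A : set pt) (B s : R) x : 0 <= s -> A x ->
  (forall x y, A x -> A y -> Defs.edist x y <= B) -> (hcontrib s A <= (powR B s)%:E)%E.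
Proof.
move=> s0 hx h; have h1 := diam_le h; have h2 := diam_ge0 hx.
rewrite /hcontrib; move: h1 h2; case: (diam A) => [r| |] //=.
rewrite !lee_fin => rB r0; rewrite ge0_ler_powR // nnegrE //.
exact: le_trans rB.
Qed.

Lemma hcontrib0 s : hcontrib s (@set0 pt) = 0%E.
Proof.
rewrite /hcontrib /diam.
have -> : [set r | exists x y : pt, set0 x /\ set0 y /\ r = (Defs.edist x y)%:E] = set0.
  by apply/seteqP; split => // r [x [y [[]]]].
by rewrite ereal_sup0.
Qed.

Lemma hcontrib_ge0 s (A : set pt) : (0 <= hcontrib s A)%E.
Proof. rewrite /hcontrib; case: (diam A) => [r| |] //=; by rewrite lee_fin powR_ge0. Qed.

Lemma edist_phi (w : seq ('I_d -> bool)) (x y : pt) : Xcube x -> Xcube y ->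
  Defs.edist (phi_word w x) (phi_word w y) <= Num.sqrt (d%:R) / 2 ^+ size w.
Proof.
move=> hx hy; rewrite /Defs.edist.
set c := ((2 : R) ^+ size w)^-1.
have c0 : 0 <= c by rewrite invr_ge0 exprn_ge0.
have -> : Num.sqrt d%:R / 2 ^+ size w = Num.sqrt (d%:R * c ^+ 2).
  by rewrite sqrtrM ?ler0n // sqrtr_sqr ger0_norm.
rewrite ler_sqrt; last by rewrite mulr_ge0 ?ler0n // exprn_ge0.
have -> : d%:R * c ^+ 2 = \sum_(l < d) c ^+ 2.
  by rewrite sumr_const card_ord mulr_natl.
apply: ler_sum => l _; rewrite (phi_wordE w x) (phi_wordE w y).
have -> : x l / 2 ^+ size w + phi_word w (fun=> 0) l - (y l / 2 ^+ size w + phi_word w (fun=> 0) l) = (x l - y l) * c.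
  by rewrite /c; ring.
have /andP [a0 a1] := hx l; have /andP [b0 b1] := hy l.
rewrite exprMn -[X in _ <= X]mul1r; apply: ler_wpM2r; first exact: exprn_ge0.
move: (x l) (y l) a0 a1 b0 b1 => a b a0 a1 b0 b1.
clear -a0 a1 b0 b1; rewrite expr2; nra.
Qed.

End Diam.
Section RA.
Variable R : realType.

Lemma powR_expR (a s : R) : 0 < a -> powR a s = expR (s * ln a).
Proof. by move=> a0; rewrite /powR gt_eqF. Qed.

Lemma ln_q2L (q : R) L : 0 < q -> ln (q / 2 ^+ L) = ln q - L%:R * ln 2.
Proof.
by move=> q0; rewrite ln_div ?posrE ?exprn_gt0 // lnXn // mulr_natl.
Qed.

Lemma pow2_expR n : (2 : R) ^+ n = expR (n%:R * ln 2).
Proof. by rewrite expRM_natl lnK // posrE. Qed.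

Lemma RA (s eps del : R) (d : nat) : 0 < s -> 0 < eps -> 0 < del -> (1 <= d)%N ->
  exists v0 : nat, forall v N L : nat, (v0 <= v)%N -> (N <= 2 ^ (d * (v * v)))%N ->
    (v ^ 3 <= L)%N ->
    N%:R * powR (Num.sqrt d%:R / 2 ^+ L) s <= eps /\ Num.sqrt d%:R / 2 ^+ L <= del.
Proof.
move=> s0 e0 d0 d1.
set q := Num.sqrt (d%:R : R).
have q0 : 0 < q by rewrite sqrtr_gt0 ltr0n.
set l2 := ln (2 : R).
have l20 : 0 < l2 by rewrite ln_gt0 // ltr1n.
set M := Num.max (Num.max ((d%:R + 1) / s) ((s * ln q - ln eps) / l2)) ((ln q - ln del) / l2).
exists (Num.bound `|M|).+1 => v N L hv hN hL.
have hM : M < v%:R.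
  apply: (le_lt_trans (ler_norm M)); apply: (lt_le_trans (archi_boundP (normr_ge0 M))).
  rewrite ler_nat; exact: ltnW.
have v1 : (1 : R) <= v%:R by rewrite ler1n; apply: leq_trans hv.
have h1 : (d%:R + 1) / s < v%:R.
  by apply: le_lt_trans hM; rewrite /M !le_max lexx.
have h2 : (s * ln q - ln eps) / l2 < v%:R.
  by apply: le_lt_trans hM; rewrite /M !le_max lexx orbT.
have h3 : (ln q - ln del) / l2 < v%:R.
  by apply: le_lt_trans hM; rewrite /M !le_max lexx orbT.
rewrite ltr_pdivrMr // in h1; rewrite ltr_pdivrMr // in h2; rewrite ltr_pdivrMr // in h3.
have hL' : v%:R ^+ 3 <= (L%:R : R) by rewrite -natrX ler_nat.
have hvL : v%:R <= (L%:R : R).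
  by apply: le_trans hL'; rewrite -natrX ler_nat cube_ge.
have ePow : powR (q / 2 ^+ L) s = expR (s * (ln q - L%:R * l2)).
  by rewrite powR_expR ?divr_gt0 ?exprn_gt0 // ln_q2L.
have eN : (N%:R : R) <= expR ((d * (v * v))%:R * l2).
  by rewrite -pow2_expR -natrX ler_nat.
split.
- rewrite ePow; apply: le_trans (ler_wpM2r (expR_ge0 _) eN) _.
  rewrite -expRD -[X in _ <= X](lnK (x := eps)) ?posrE // ler_expR.
  rewrite !natrM.
  set vv := (v%:R : R); set LL := (L%:R : R); set dd := (d%:R : R).
  have k1 : (dd + 1) * vv ^+ 2 <= s * LL.
    have : s * vv ^+ 3 <= s * LL by rewrite ler_pM2l.
    apply: le_trans; rewrite (_ : s * vv ^+ 3 = (vv * s) * vv ^+ 2); last by ring.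
    by rewrite ler_pM2r ?ltW // exprn_gt0 // (lt_le_trans ltr01 v1).
  have k2 : (dd + 1) * vv ^+ 2 * l2 <= s * LL * l2 by rewrite ler_pM2r.
  have k3 : vv * l2 <= vv ^+ 2 * l2.
    rewrite ler_pM2r // expr2 -[X in X <= _]mul1r ler_pM2r //.
    exact: (lt_le_trans ltr01 v1).
  rewrite /vv /LL /dd in k2 k3 *.
  clear -k2 k3 h2; move: (ln q) (ln eps) (v%:R : R) (L%:R : R) (d%:R : R) l2 k2 k3 h2.
  move=> a b c e f g; rewrite !expr2 => k2 k3 h2; nra.
- rewrite -[X in _ <= X](lnK (x := del)) ?posrE //.
  rewrite -[X in X <= _](lnK (x := q / 2 ^+ L)) ?posrE ?divr_gt0 ?exprn_gt0 //.
  rewrite ler_expR ln_q2L // -/l2.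
  have k : v%:R * l2 <= L%:R * l2 by rewrite ler_pM2r.
  clear -k h3; move: (ln q) (ln del) (v%:R : R) (L%:R : R) l2 k h3.
  move=> a b c e f k h3; nra.
Qed.

End RA.
Section Core.
Variable R : realType.
Variable d : nat.
Variables (U V omega : nat -> nat) (J : nat).
Hypothesis d1 : (1 <= d)%N.
Hypothesis fr : is_frame U V.
Hypothesis wpos : forall k, (0 < omega k)%N.
Hypothesis hgood : forall j, (J <= j)%N -> exists k, (k < V (j + 2))%N /\ (j + 3 <= omega k)%N.

Local Notation JS := (@Jset R d U V omega).

Lemma sum_if_le (p : R) (N M : nat) : 0 <= p ->
  \sum_(i < M) (if (i < N)%N then p else 0) <= N%:R * p.
Proof.
move=> p0; apply: (@le_trans _ _ ((minn M N)%:R * p)); last first.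
  by rewrite ler_wpM2r // ler_nat geq_minr.
elim: M => [|M IH]; first by rewrite big_ord0 min0n mul0r.
rewrite big_ord_recr /=; case: ltnP => hM.
  have -> : minn M.+1 N = (minn M N).+1 by rewrite !minnE; lia.
  by rewrite -addn1 natrD mulrDl mul1r lerD2r.
have -> : minn M.+1 N = minn M N by rewrite !minnE; lia.
by rewrite addr0.
Qed.

Lemma hd_small s del eps : 0 < s -> 0 < del -> 0 < eps ->
  (hausdorff_delta s del JS <= eps%:E)%E.
Proof.
move=> s0 del0 eps0.
have [v0 hv0] := RA s0 eps0 del0 d1.
set j := maxn J v0.
have [k0 [hk0 hk0']] := hgood (leq_maxl J v0 : (J <= j)%N).
have [k hk kmin] := @find_ex_minn (fun k => (j + 3 <= omega k)%N) (ex_intro _ k0 hk0').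
have kv : (k < V (j + 2))%N by apply: leq_ltn_trans (kmin _ hk0') hk0.
have hlt : forall i, (i < k)%N -> (omega i < j + 3)%N.
  move=> i ik; rewrite ltnNge; apply/negP => h; have := kmin _ h; lia.
set v := V (j + 2).
set ls := map omega (iota 0 k).
set Ws := @Wpre d U V ls.
set Lm := U (omega k).
set N := size Ws.
set B := Num.sqrt (d%:R : R) / 2 ^+ Lm.
have hv : (v0 <= v)%N.
  apply: (@leq_trans j); first exact: leq_maxr.
  apply: leq_trans (Vgrowth fr j); rewrite -[X in (X <= _)%N]muln1.
  apply: leq_mul; last by rewrite expn_gt0.
  apply: leq_trans (leq_addr 3 j) _; rewrite -[X in (X <= _)%N]expn1.
  by apply: leq_pexp2l; lia.
have hN : (N <= 2 ^ (d * (v * v)))%N.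
  rewrite /N /Ws size_Wpre; apply: leq_pexp2l => //; apply: leq_mul => //.
  apply: (@leq_trans (k * v)); last by apply: leq_mul => //; exact: ltnW.
  rewrite /ls; have : forall i, (i \in iota 0 k) -> (V (omega i) <= v)%N.
    move=> i; rewrite mem_iota add0n => /andP [_ ik].
    rewrite /v; apply: (Vmono fr (wpos i)); have := hlt i ik; lia.
  rewrite -[X in (_ <= X * _)%N](size_iota 0 k).
  elim: (iota 0 k) => [|a l IH] //= h.
  rewrite mulSn leq_add //; first by apply: h; rewrite in_cons eqxx.
  by apply: IH => i hi; apply: h; rewrite in_cons hi orbT.
have hL : (v ^ 3 <= Lm)%N.
  rewrite /v; apply: leq_trans (Vcube fr (_ : (1 <= j + 2)%N)) _; first lia.
  rewrite /Lm; apply: (Umono fr); lia.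
have [hsum hdel] := hv0 v N Lm hv hN hL.
have B0 : 0 <= B by rewrite divr_ge0 ?sqrtr_ge0 // exprn_ge0.
pose C := fun n => if (n < N)%N then phi_word (nth [::] Ws n ++ nseq Lm (@zerob d)) @` (@Xcube R d)
                   else set0.
have Cb : forall n x y, C n x -> C n y -> Defs.edist x y <= B.
  move=> n x y; rewrite /C; case: ifP => // _ [x' hx' <-] [y' hy' <-].
  apply: le_trans (edist_phi _ hx' hy') _; rewrite ler_pM2l ?sqrtr_gt0 ?ltr0n //.
  rewrite lef_pV2 ?posrE ?exprn_gt0 // ler_eXn2l // ?ltr1n //.
  by rewrite size_cat size_nseq leq_addl.
apply: ge_ereal_inf; exists (\sum_(i <oo) hcontrib s (C i))%E.
  exists C => //; split.
    move=> x hx; have [ws [sws hI [y [hy ->]]]] := @Jset_stage R d U V omega x k hx.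
    have hin : List.In (flatten ws) Ws.
      apply: In_Wpre; first by rewrite size_map size_iota.
      move=> i; rewrite size_map size_iota => ik.
      by rewrite /ls (nth_map 0%N) ?size_iota // nth_iota //; apply: hI.
    have [n [hn e]] := In_nth [::] hin.
    exists n => //; rewrite /C hn; exists y => //; by rewrite e.
  move=> i; apply: le_trans (diam_le (Cb i)) _; by rewrite lee_fin.
apply: (@le_trans _ _ (\sum_(i <oo) ((if (i < N)%N then powR B s else 0)%:E))%E).
  apply: lee_nneseries; first by move=> i _ _; exact: hcontrib_ge0.
  move=> i _.
  rewrite /C; case: ifP => hi.
    apply: (hcontrib_le (x := phi_word (nth [::] Ws i ++ nseq Lm (@zerob d)) (fun _ => 0))) => //.
      exact: ltW.
    exists (fun _ => 0) => // l; by rewrite lexx ler01.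
    by move=> x y hx hy; apply: (Cb i); rewrite /C hi.
  by rewrite hcontrib0.
apply: nneseries_ub.
  by move=> n; case: ifP => // _; exact: powR_ge0.
move=> M; apply: le_trans (sum_if_le _ _ (powR_ge0 B s)) hsum.
Qed.

End Core.
Section Assembly.
Variable R : realType.
Variable d : nat.

Lemma hd_ge0 s del (A : set (pt R d)) : (0 <= hausdorff_delta s del A)%E.
Proof.
apply: le_ereal_inf_tmp => _ [C _ <-].
by apply: nneseries_ge0 => n _ _; exact: hcontrib_ge0.
Qed.

Lemma H_zero s (A : set (pt R d)) :
  (forall del eps, 0 < del -> 0 < eps -> (hausdorff_delta s del A <= eps%:E)%E) ->
  hausdorff s A = 0%E.
Proof.
move=> h.
have hd0 : forall del, 0 < del -> hausdorff_delta s del A = 0%E.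
  move=> del del0; apply/eqP; rewrite eq_le hd_ge0 andbT.
  apply/lee_addgt0Pr => e e0; rewrite add0e; exact: h.
apply/eqP; rewrite eq_le; apply/andP; split.
  by apply: ge_ereal_sup => _ [del del0 <-]; rewrite hd0.
apply: le_ereal_sup_tmp; exists (hausdorff_delta s 1 A).
  by exists 1 => //; exact: ltr01.
by rewrite hd0 // ltr01.
Qed.

Lemma hdim_zero (A : set (pt R d)) :
  (forall s, 0 < s -> hausdorff s A = 0%E) -> hdim A = 0%E.
Proof.
move=> h; apply/eqP; rewrite eq_le; apply/andP; split.
  apply/lee_addgt0Pr => e e0; rewrite add0e.
  apply: ge_ereal_inf; exists e%:E => //; exists e => //; split; [exact: ltW | exact: h].
by apply: le_ereal_inf_tmp => _ [s [s0 _] <-]; rewrite lee_fin.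
Qed.

End Assembly.

Lemma dim0 (R : realType) (d : nat) (U V omega : nat -> nat) (J : nat) :
  (1 <= d)%N -> is_frame U V -> (forall k, (0 < omega k)%N) ->
  (forall j, (J <= j)%N -> exists k, (k < V (j + 2))%N /\ (j + 3 <= omega k)%N) ->
  hdim (@Jset R d U V omega) = 0%E.
Proof.
move=> d1 fr wpos hg; apply: hdim_zero => s s0; apply: H_zero => del eps del0 eps0.
exact: (hd_small d1 fr wpos hg s0 del0 eps0).
Qed.

Theorem proposition2p4 (R : realType) (d : nat) (U V : nat -> nat) :
  (1 <= d)%N -> is_frame U V ->
  P_null R [set omega | (forall k, (0 < omega k)%N) /\
                        hdim (@Jset R d U V omega) <> 0%E].
Proof.
move=> d1 fr; apply: (Pnull_of fr) => w [wpos hd]; split => // J.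
case: (pselect (exists j, (J <= j)%N /\ forall k, (k < V (j + 2))%N -> (w k < j + 3)%N)) => // hno.
exfalso; apply: hd; apply: (@dim0 R d U V w J d1 fr wpos) => j Jj.
case: (pselect (exists k, (k < V (j + 2))%N /\ (j + 3 <= w k)%N)) => // hk.
exfalso; apply: hno; exists j; split => // k kl.
rewrite ltnNge; apply/negP => h; apply: hk; by exists k.
Qed.
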